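(* Suppose $(\mu^{(n)}_t,\nu^{(n)}_t)_{t\ge0}$, $n\in\mathbb N$, are processes in $D_{[0,\infty)}(\mathcal M_{\mathrm{tem}}(\mathbb R)^2)$ (resp. $D_{[0,\infty)}(\mathcal M_{\mathrm{rap}}(\mathbb R)^2)$) converging weakly, with respect to the Meyer–Zheng topology, to $(\mu_t,\nu_t)_{t\ge0}$, and suppose that $\mathbb P[R(\mu^{(n)}_t)\le L(\nu^{(n)}_t)\text{ for all }t>0,n\in\mathbb N]=1$. Then $\mathbb P[R(\mu_t)\le L(\nu_t)\text{ for all }t>0]=1$.
   Context: $\phi_\lambda(x)=e^{-\lambda|x|}$. $\mathcal M_{\mathrm{tem}}(\mathbb R)$: nonnegative Radon measures with $\int\phi_\lambda d\mu<\infty$ for all $\lambda>0$, with $\mu_n\to\mu$ iff $\int\varphi d\mu_n\to\int\varphi d\mu$ for every continuous $\varphi$ with, for some $\lambda>0$, $\sup|\varphi|/\phi_\lambda<\infty$ and $\varphi/\phi_\lambda$ having finite limits at $\pm\infty$; $\mathcal M_{\mathrm{rap}}(\mathbb R)$: those with $\int\phi_{-\lambda}d\mu<\infty$ for all $\lambda>0$, with $\mu_n\to\mu$ iff weak convergence and $\sup_n\int\phi_{-\lambda}d\mu_n<\infty$ for all $\lambda>0$. $D_{[0,\infty)}(E)$ is the space of càdlàg paths; the Meyer–Zheng topology on it is induced by weak convergence of pseudo-paths (the images of $e^{-t}dt$ under $t\mapsto(t,w(t))$), equivalently convergence in Lebesgue measure. ${\rm supp}(\mu)=\{x:\mu(B_\varepsilon(x))>0\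 \forall\varepsilon>0\}$, $R(\mu)=\sup{\rm supp}(\mu)$, $L(\mu)=\inf{\rm supp}(\mu)$ in $\bar{\mathbb R}$. *)

(* Defs.v *)
From HB Require Import structures.
From mathcomp Require Import all_boot all_order all_algebra.
From mathcomp Require Import all_classical all_reals all_analysis.
Set Implicit Arguments. Unset Strict Implicit. Unset Printing Implicit Defensive.
Import Order.TTheory GRing.Theory Num.Theory.
Import numFieldNormedType.Exports.
Local Open Scope classical_set_scope.
Local Open Scope ring_scope.

Section Defs.
Variable R : realType.

Definition Meas := {measure set R -> \bar R}.

Definition phil (lam x : R) : R := expR (- (lam * `|x|)).

Definition Mtem (mu : Meas) : Prop :=
  (forall a b : R, mu `[a, b]%classic < +oo)%E /\
  (forall lam : R, 0 < lam -> (\int[mu]_x (phil lam x)%:E < +oo)%E).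

Definition Mrap (mu : Meas) : Prop :=
  forall lam : R, 0 < lam -> (\int[mu]_x (phil (- lam) x)%:E < +oo)%E.

Definition tem_test (f : R -> R) : Prop :=
  continuous f /\
  exists lam : R, 0 < lam /\
    (exists M : R, forall x, `|f x| <= M * phil lam x) /\
    (exists l : R, (fun x => f x / phil lam x) @ +oo --> l) /\
    (exists l : R, (fun x => f x / phil lam x) @ -oo --> l).

Definition tem_conv (mus : nat -> Meas) (mu : Meas) : Prop :=
  forall f, tem_test f ->
    (fun n => (\int[mus n]_x (f x)%:E)%E) @ \oo --> (\int[mu]_x (f x)%:E)%E.

Definition bcont (f : R -> R) : Prop :=
  continuous f /\ exists M : R, forall x, `|f x| <= M.

Definition rap_conv (mus : nat -> Meas) (mu : Meas) : Prop :=
  (forall f, bcont f ->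
    (fun n => (\int[mus n]_x (f x)%:E)%E) @ \oo --> (\int[mu]_x (f x)%:E)%E) /\
  (forall lam : R, 0 < lam -> exists C : R,
     forall n, (\int[mus n]_x (phil (- lam) x)%:E <= C%:E)%E).

Definition Mspace (sp : bool) : Meas -> Prop := if sp then Mrap else Mtem.
Definition Mconv (sp : bool) : (nat -> Meas) -> Meas -> Prop :=
  if sp then rap_conv else tem_conv.

Definition Espace sp (x : Meas * Meas) : Prop := Mspace sp x.1 /\ Mspace sp x.2.
Definition Econv sp (xs : nat -> Meas * Meas) (x : Meas * Meas) : Prop :=
  Mconv sp (fun k => (xs k).1) x.1 /\ Mconv sp (fun k => (xs k).2) x.2.

(* paths are functions of time t : R, only t >= 0 matters *)
Definition mpath := R -> Meas * Meas.

Definition cadlag sp (w : mpath) : Prop :=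
  (forall t : R, 0 <= t -> Espace sp (w t)) /\
  (forall t : R, 0 <= t -> forall s : nat -> R,
     (forall k, t <= s k) -> s @ \oo --> t -> Econv sp (fun k => w (s k)) (w t)) /\
  (forall t : R, 0 < t -> exists x, Espace sp x /\
     forall s : nat -> R, (forall k, 0 <= s k < t) -> s @ \oo --> t ->
       Econv sp (fun k => w (s k)) x).

Definition bcontE sp (F : R -> Meas * Meas -> R) : Prop :=
  (exists C : R, forall t x, 0 <= t -> Espace sp x -> `|F t x| <= C) /\
  (forall (t : R) (x : Meas * Meas) (ts : nat -> R) (xs : nat -> Meas * Meas),
     0 <= t -> Espace sp x -> (forall k, 0 <= ts k /\ Espace sp (xs k)) ->
     ts @ \oo --> t -> Econv sp xs x ->
     (fun k => F (ts k) (xs k)) @ \oo --> F t x).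

(* integral of F against the pseudo-mpath of w
   (image of e^{-t}dt on [0,oo) under t |-> (t, w t)) *)
Definition pseudo_int (F : R -> Meas * Meas -> R) (w : mpath) : \bar R :=
  (\int[lebesgue_measure]_(t in [set t : R | (0 <= t)%R]) ((F t (w t) * expR (- t))%R)%:E)%E.

(* Meyer-Zheng convergence: weak convergence of pseudo-paths *)
Definition MZconv sp (ws : nat -> mpath) (w : mpath) : Prop :=
  forall F, bcontE sp F ->
    (fun k => pseudo_int F (ws k)) @ \oo --> pseudo_int F w.

Definition MZbcont sp (G : mpath -> R) : Prop :=
  (exists C : R, forall w, cadlag sp w -> `|G w| <= C) /\
  (forall (ws : nat -> mpath) w, (forall k, cadlag sp (ws k)) -> cadlag sp w ->
     MZconv sp ws w -> (fun k => G (ws k)) @ \oo --> G w).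

(* a random element of D_[0,oo)(E) (Borel sigma-algebra of the MZ topology) *)
Definition Dprocess sp d (T : measurableType d) (X : T -> mpath) : Prop :=
  (forall om, cadlag sp (X om)) /\
  (forall G, MZbcont sp G -> measurable_fun setT (fun om => G (X om))).

Definition MZweak_conv sp d (T : measurableType d) (P : probability T R)
    (Xs : nat -> T -> mpath) (X : T -> mpath) : Prop :=
  forall G, MZbcont sp G ->
    (fun n => (\int[P]_om (G (Xs n om))%:E)%E) @ \oo --> (\int[P]_om (G (X om))%:E)%E.

(* support, R(mu) = sup supp, L(mu) = inf supp in extended reals *)
Definition supp (mu : Meas) : set R :=
  [set x : R | forall e : R, 0 < e -> (0 < mu (`](x - e)%R, (x + e)%R[%classic : set R))%E].
Definition Rsup (mu : Meas) : \bar R := ereal_sup [set x%:E | x in supp mu].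
Definition Linf (mu : Meas) : \bar R := ereal_inf [set x%:E | x in supp mu].

Definition RL_ordered (w : mpath) : Prop :=
  forall t : R, 0 < t -> (Rsup (w t).1 <= Linf (w t).2)%E.

End Defs.

(* Main.v *)
Set Warnings "-all".
Require Import Defs.
From HB Require Import structures.
From mathcomp Require Import all_boot all_order all_algebra.
From mathcomp Require Import all_classical all_reals all_analysis.
From mathcomp Require Import lra.
Import Order.TTheory GRing.Theory Num.Theory.
Import numFieldNormedType.Exports.
Local Open Scope classical_set_scope.
Local Open Scope ring_scope.
Section S.
Variable R : realType.
Local Open Scope ereal_scope.

Lemma nn_mono d (T : measurableType d) (mu : {measure set T -> \bar R})
  (A B : set T) (f g : T -> \bar R) :
  (forall x, A x -> 0 <= f x) -> (forall x, A x -> B x /\ f x <= g x) ->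
  (forall x, B x -> 0 <= g x) ->
  \int[mu]_(x in A) f x <= \int[mu]_(x in B) g x.
Proof.
move=> f0 fg g0; rewrite ge0_integralE // ge0_integralE //.
apply: le_ereal_sup => _ [h hf <-]; exists h => //= x.
apply: le_trans (hf x) _; rewrite /patch; case: ifPn => [/set_mem Ax|_].
  by have [Bx fgx] := fg _ Ax; rewrite (mem_set Bx).
by case: ifPn => // /set_mem /g0.
Qed.


Lemma supp_exists (mu : Meas R) (S : set R) : measurable S -> 0 < mu S ->
  exists x, S x /\ supp mu x.
Proof.
move=> mS muS; apply: contrapT => H.
pose U : nat -> set R := fun n => match (unpickle n : option (rat * rat)) with
  | Some pq => if `[< mu `](ratr pq.1 : R), ratr pq.2[%classic = 0 >]
               then `](ratr pq.1 : R), ratr pq.2[%classic else set0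
  | None => set0 end.
have Uneg : forall n, mu.-negligible (U n).
  move=> n; rewrite /U; case: (unpickle n) => [pq|]; last by exact: negligible_set0.
  case: asboolP => h; last exact: negligible_set0.
  by exists (`](ratr pq.1 : R), ratr pq.2[%classic); split => //.
have SU : S `<=` \bigcup_n U n.
  move=> x Sx.
  have : ~ supp mu x by move=> sx; apply: H; exists x.
  rewrite /supp /= => /existsNP[e /not_implyP[e0 /negP]]; rewrite -leNgt => mule.
  have mue : mu `](x - e)%R, (x + e)%R[%classic = 0.
    by apply/eqP; rewrite eq_le mule measure_ge0.
  have [p pin] : (exists p : rat, ratr p \in `](x - e)%R, x[).
    by apply: rat_in_itvoo; rewrite ltrBlDr ltrDl.
  have [q qin] : (exists q : rat, ratr q \in `]x, (x + e)%R[).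
    by apply: rat_in_itvoo; rewrite ltrDl.
  move: pin qin; rewrite !in_itv /= => /andP[p1 p2] /andP[q1 q2].
  exists (pickle (p, q)); first by [].
  rewrite /U pickleK.
  have sub : `](ratr p : R), ratr q[%classic `<=` `](x - e)%R, (x + e)%R[%classic.
    move=> y /=; rewrite !in_itv /= => /andP[y1 y2].
    by rewrite (lt_trans p1 y1) (lt_trans y2 q2).
  have -> : `[< mu `](ratr p : R), ratr q[%classic = 0 >].
    apply/asboolP/eqP; rewrite eq_le measure_ge0 andbT -mue.
    by apply: le_measure => //; rewrite inE.
  simpl; by rewrite in_itv /= p2 q1.
have [B [mB muB0 UB]] := negligible_bigcup Uneg.
have : mu S <= mu B by apply: le_measure; rewrite ?inE //; exact: subset_trans UB.
by rewrite muB0 leNgt muS.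
Qed.

Lemma int_pos_meas (mu : Meas R) (f : R -> R) (S : set R) : measurable S ->
  measurable_fun setT f -> (forall x, (0 <= f x)%R) -> (forall x, ~ S x -> f x = 0%R) ->
  0 < \int[mu]_x (f x)%:E -> 0 < mu S.
Proof.
move=> mS mf f0 fS fpos; have := measure_ge0 mu S; rewrite le_eqVlt => /predU1P[muS0|//].
move: fpos; apply: contraTT => _; rewrite -leNgt.
rewrite (ge0_negligible_integral _ _ _ _ (esym muS0)) //; first last.
- by move=> x _; rewrite lee_fin.
- by apply/measurable_realfun.measurable_EFinP.
rewrite integral0_eq // => x [_ nSx].
by rewrite fS.
Qed.

Lemma int_pos_supp (mu : Meas R) (f : R -> R) (x e k : R) :
  measurable_fun setT f -> (forall y, (0 <= f y)%R) -> (0 < e)%R -> (0 < k)%R ->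
  (forall y, (x - e < y)%R -> (y < x + e)%R -> (k <= f y)%R) -> supp mu x ->
  0 < \int[mu]_y (f y)%:E.
Proof.
move=> mf f0 e0 k0 fk sx.
have mB : measurable (`](x - e)%R, (x + e)%R[%classic : set R) by [].
have h1 : \int[mu]_(y in `](x - e)%R, (x + e)%R[%classic) (cst k%:E) y
        <= \int[mu]_(y in `](x - e)%R, (x + e)%R[%classic) (f y)%:E.
  apply: ge0_le_integral => //.
  - by move=> y _; rewrite lee_fin ltW.
  - by apply/measurable_realfun.measurable_EFinP; apply: measurable_funS mf.
  - move=> y /=; rewrite in_itv /= => /andP[y1 y2].
    by rewrite lee_fin fk.
have h2 : \int[mu]_(y in `](x - e)%R, (x + e)%R[%classic) (f y)%:E
        <= \int[mu]_y (f y)%:E.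
  apply: ge0_subset_integral => //.
  - by apply/measurable_realfun.measurable_EFinP.
  - by move=> y _; rewrite lee_fin.
rewrite integral_cst // in h1.
apply: lt_le_trans (le_trans h1 h2).
by apply: mule_gt0; rewrite ?lte_fin //; apply: sx.
Qed.

Local Close Scope ereal_scope.

Definition clip (z : R) : R := Num.min (Num.max z 0%R) 1%R.

Lemma clip_ge0 z : (0 <= clip z)%R.
Proof. by rewrite /clip le_min ler01 andbT le_max lexx orbT. Qed.

Lemma clip_le1 z : (clip z <= 1)%R.
Proof. by rewrite /clip ge_min lexx orbT. Qed.

Lemma clip_cont : continuous clip.
Proof.
have h : continuous (fun z : R => Num.max z 0%R).
  by apply: (@max_fun_continuous _ _ R id (cst 0%R)) => x; [exact: cvg_id|exact: cvg_cst].
by apply: (@min_fun_continuous _ _ R _ (cst 1%R) h) => x; exact: cvg_cst.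
Qed.

Lemma clip_ge z : (0 < z)%R -> (Num.min z 1 <= clip z)%R.
Proof.
by move=> z0; rewrite /clip (_ : Num.max z 0 = z)// max_l// ltW.
Qed.

Lemma clip_eq0 z : (z <= 0)%R -> clip z = 0%R.
Proof. by move=> z0; rewrite /clip max_r // min_l // ler01. Qed.

Lemma clip_eq1 z : (1 <= z)%R -> clip z = 1%R.
Proof.
by move=> z1; rewrite /clip max_l ?(le_trans ler01 z1) // min_r.
Qed.

Lemma phil_cont : continuous (phil 1%R : R -> R).
Proof.
move=> x; apply: continuous_comp; last exact: continuous_expR.
apply: continuousN; apply: continuousM; first exact: cvg_cst.
exact: norm_continuous.
Qed.

Lemma phil_gt0 (y : R) : (0 < phil 1 y)%R.
Proof. exact: expR_gt0. Qed.

Lemma phil_le1 (y : R) : (phil 1 y <= 1)%R.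
Proof. by rewrite /phil expR_le1 oppr_le0 mul1r. Qed.

Definition bumpf (k : R -> R) (y : R) : R := (phil 1 y * k y)%R.

Lemma bumpf_good (k : R -> R) : continuous k ->
  (forall y, 0 <= k y <= 1)%R ->
  (exists l : R, (fun x => k x) @ +oo --> l) -> (exists l : R, (fun x => k x) @ -oo --> l) ->
  tem_test (bumpf k) /\ bcont (bumpf k).
Proof.
move=> kc k01 [lp klp] [ln kln].
have bc : continuous (bumpf k).
  by move=> x; apply: continuousM; [exact: phil_cont|exact: kc].
split; last first.
  split; first exact: bc.
  exists 1%R => x; rewrite /bumpf.
  have /andP[k0 k1] := k01 x.
  have p0 := phil_gt0 x.
  rewrite ger0_norm; last by rewrite mulr_ge0 // ltW.
  by rewrite mulr_ile1 // ?phil_le1 // ltW.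
split; first exact: bc.
exists 1%R; split; first exact: ltr01.
have E : (fun x => bumpf k x / phil 1 x) = (fun x => k x).
  by apply: funext => x; rewrite /bumpf mulrC mulKf // gt_eqF // phil_gt0.
split; last by rewrite E; split; [exists lp|exists ln].
exists 1%R => x; rewrite /bumpf mul1r.
have /andP[k0 k1] := k01 x.
have p0 := phil_gt0 x.
rewrite ger0_norm; last by rewrite mulr_ge0 // ltW.
by rewrite ler_piMr // ltW.
Qed.

Definition fb (c : R) := bumpf (fun y => clip (y - c)).
Definition gb (c : R) := bumpf (fun y => clip (c - y)).

Lemma fb_good c : tem_test (fb c) /\ bcont (fb c).
Proof.
apply: bumpf_good.
- move=> x; apply: (@continuous_comp _ _ _ (fun y => y - c) clip x); last exact: clip_cont.
  by apply: continuousB; [exact: cvg_id|exact: cvg_cst].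
- by move=> y; rewrite clip_ge0 clip_le1.
- exists 1%R; apply: cvg_near_cst; near=> y; apply: clip_eq1.
  by rewrite lerBrDr; apply/ltW; near: y; apply: nbhs_pinfty_gt; exact: num_real.
- exists 0%R; apply: cvg_near_cst; near=> y; apply: clip_eq0.
  by rewrite subr_le0; apply/ltW; near: y; apply: nbhs_ninfty_lt; exact: num_real.
Unshelve. all: by end_near.
Qed.

Lemma gb_good c : tem_test (gb c) /\ bcont (gb c).
Proof.
apply: bumpf_good.
- move=> x; apply: (@continuous_comp _ _ _ (fun y => c - y) clip x); last exact: clip_cont.
  by apply: continuousB; [exact: cvg_cst|exact: cvg_id].
- by move=> y; rewrite clip_ge0 clip_le1.
- exists 0%R; apply: cvg_near_cst; near=> y; apply: clip_eq0.
  by rewrite subr_le0; apply/ltW; near: y; apply: nbhs_pinfty_gt; exact: num_real.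
- exists 1%R; apply: cvg_near_cst; near=> y; apply: clip_eq1.
  rewrite lerBrDr -lerBrDl; apply/ltW; near: y; apply: nbhs_ninfty_lt; exact: num_real.
Unshelve. all: by end_near.
Qed.

Local Open Scope ereal_scope.

Lemma Mconv_good sp (mus : nat -> Meas R) (mu : Meas R) (f : R -> R) :
  tem_test f -> bcont f -> Mconv sp mus mu ->
  (fun n => \int[mus n]_x (f x)%:E) @ \oo --> \int[mu]_x (f x)%:E.
Proof. by case: sp => /= tf bf; [case=> h _; apply: h|move=> h; apply: h]. Qed.

Definition Hc (y : \bar R) : R := fine (mine y 1%E).

Lemma Hc_ge0 y : 0 <= y -> (0 <= Hc y)%R.
Proof. by move=> y0; rewrite /Hc fine_ge0 // le_min y0 lee01. Qed.

Lemma Hc_le1 y : 0 <= y -> (Hc y <= 1)%R.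
Proof.
move=> y0; rewrite /Hc -lee_fin fineK ?ge_min ?lexx ?orbT //.
rewrite fin_numElt; apply/andP; split.
  by apply: (lt_le_trans _ (_ : 0 <= _)); rewrite ?ltNye // le_min y0 lee01.
by apply: (le_lt_trans (_ : _ <= 1%E)); rewrite ?ltey // ge_min lexx orbT.
Qed.

Lemma Hc_gt0 y : 0 < y -> (0 < Hc y)%R.
Proof.
move=> y0; rewrite /Hc; case: y y0 => [r| |] //=.
  rewrite lte_fin => r0; rewrite /mine; case: ifP => _ //=.
Qed.

Lemma Hc_cvg (u : nat -> \bar R) y : (forall n, 0 <= u n) -> 0 <= y ->
  u n @[n --> \oo] --> y -> Hc (u n) @[n --> \oo] --> Hc y.
Proof.
move=> u0 y0 uy.
have mc : (fun n => mine (u n) 1) @ \oo --> mine y 1.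
  apply: (@continuous2_cvg _ _ _ _ _ _ u (fun _ => 1%E) (fun a b => mine a b) y 1%E) => //.
    exact: (@min_continuous _ (\bar R) (y, 1%E)).
  exact: cvg_cst.
have fin : mine y 1 \is a fin_num.
  rewrite fin_numElt; apply/andP; split.
    by apply: (lt_le_trans _ (_ : 0 <= _)); rewrite ?ltNye // le_min y0 lee01.
  by apply: (le_lt_trans (_ : _ <= 1%E)); rewrite ?ltey // ge_min lexx orbT.
rewrite -(fineK fin) in mc.
exact: (proj2 (proj1 (fine_cvgP _ _) mc)).
Qed.

Lemma fb_ge0 c y : (0 <= fb c y)%R.
Proof. by rewrite /fb /bumpf mulr_ge0 ?clip_ge0 // ltW // phil_gt0. Qed.

Lemma gb_ge0 c y : (0 <= gb c y)%R.
Proof. by rewrite /gb /bumpf mulr_ge0 ?clip_ge0 // ltW // phil_gt0. Qed.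

Lemma int_fb_ge0 c (mu : Meas R) : 0 <= \int[mu]_y (fb c y)%:E.
Proof. by apply: integral_ge0 => y _; rewrite lee_fin fb_ge0. Qed.

Lemma int_gb_ge0 c (mu : Meas R) : 0 <= \int[mu]_y (gb c y)%:E.
Proof. by apply: integral_ge0 => y _; rewrite lee_fin gb_ge0. Qed.

Definition Fc (c : R) (t : R) (x : Meas R * Meas R) : R :=
  (Hc (\int[x.1]_y (fb c y)%:E) * Hc (\int[x.2]_y (gb c y)%:E))%R.

Lemma Fc_ge0 c t x : (0 <= Fc c t x)%R.
Proof. by rewrite /Fc mulr_ge0 // Hc_ge0 // ?int_fb_ge0 ?int_gb_ge0. Qed.

Lemma Fc_le1 c t x : (Fc c t x <= 1)%R.
Proof.
by rewrite /Fc mulr_ile1 // ?Hc_ge0 ?Hc_le1 // ?int_fb_ge0 ?int_gb_ge0.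
Qed.

Lemma Fc_bcontE sp c : bcontE sp (Fc c).
Proof.
split.
  by exists 1%R => t x _ _; rewrite ger0_norm ?Fc_ge0 ?Fc_le1.
move=> t x ts xs _ _ _ _ [h1 h2]; rewrite /Fc; apply: cvgM.
  apply: Hc_cvg; [move=> n; exact: int_fb_ge0|exact: int_fb_ge0|].
  by apply: Mconv_good h1; case: (fb_good c).
apply: Hc_cvg; [move=> n; exact: int_gb_ge0|exact: int_gb_ge0|].
by apply: Mconv_good h2; case: (gb_good c).
Qed.

Lemma pint_ge0 c (w : mpath R) : 0 <= pseudo_int (Fc c) w.
Proof.
apply: integral_ge0 => t _; rewrite lee_fin mulr_ge0 ?Fc_ge0 //.

Qed.

Definition Gc c (w : mpath R) : R := Hc (pseudo_int (Fc c) w).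

Lemma Gc_ge0 c w : (0 <= Gc c w)%R.
Proof. exact/Hc_ge0/pint_ge0. Qed.

Lemma Gc_MZbcont sp c : MZbcont sp (Gc c).
Proof.
split.
  by exists 1%R => w _; rewrite ger0_norm ?Gc_ge0 // Hc_le1 // pint_ge0.
move=> ws w _ _ h; apply: Hc_cvg; [move=> n; exact: pint_ge0|exact: pint_ge0|].
by apply: h; exact: Fc_bcontE.
Qed.

Lemma Hc_pos_inv y : 0 <= y -> (0 < Hc y)%R -> 0 < y.
Proof.
move=> y0; apply: contraTT; rewrite -leNgt => y0'.
have -> : y = 0 by apply/eqP; rewrite eq_le y0 y0'.
by rewrite /Hc /mine lte01 /= ltxx.
Qed.

Lemma bump_lb (x e z a : R) : (0 < e)%R -> (x - e < z)%R -> (z < x + e)%R ->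
  (e <= a)%R -> (expR (- (`|x| + e)) * Num.min e 1 <= phil 1 z * clip a)%R.
Proof.
move=> e0 z1 z2 ea.
apply: ler_pM.
- exact: ltW (expR_gt0 _).
- by rewrite le_min ler01 ltW.
- rewrite /phil ler_expR mul1r lerN2.
  have : (`|z - x| < e)%R.
    by rewrite ltr_norml; apply/andP; split; lra.
  move=> h; apply: (le_trans (_ : `|z| <= `|x| + `|z - x|)%R).
    by have := ler_normD x (z - x)%R; rewrite [(x + _)%R]addrC subrK.
  by rewrite lerD2l ltW.
- rewrite /clip (max_l (ltW (lt_le_trans e0 ea))).
  by rewrite le_min !ge_min ea lexx !orbT.
Qed.

Lemma fb_meas c : measurable_fun setT (fb c).
Proof. by apply: measurable_realfun.continuous_measurable_fun; case: (fb_good c) => [[]]. Qed.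

Lemma gb_meas c : measurable_fun setT (gb c).
Proof. by apply: measurable_realfun.continuous_measurable_fun; case: (gb_good c) => [[]]. Qed.

Lemma fb_pos_supp c (mu : Meas R) : 0 < \int[mu]_y (fb c y)%:E ->
  exists x, (c < x)%R /\ supp mu x.
Proof.
move=> h.
have : 0 < mu `]c, +oo[%classic.
  apply: (@int_pos_meas mu (fb c) `]c, +oo[%classic _ (fb_meas c) (@fb_ge0 c) _ h) => //.
  move=> y; rewrite /= in_itv /= andbT => /negP; rewrite -leNgt => yc.
  by rewrite /fb /bumpf clip_eq0 ?mulr0 // subr_le0.
move=> /supp_exists [//|x [xin sx]]; exists x; split => //.
by move: xin; rewrite /= in_itv /= andbT.
Qed.

Lemma gb_pos_supp c (mu : Meas R) : 0 < \int[mu]_y (gb c y)%:E ->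
  exists x, (x < c)%R /\ supp mu x.
Proof.
move=> h.
have : 0 < mu `]-oo, c[%classic.
  apply: (@int_pos_meas mu (gb c) `]-oo, c[%classic _ (gb_meas c) (@gb_ge0 c) _ h) => //.
  move=> y; rewrite /= in_itv /= => /negP; rewrite -leNgt => yc.
  by rewrite /gb /bumpf clip_eq0 ?mulr0 // subr_le0.
move=> /supp_exists [//|x [xin sx]].
by exists x; split => //; move: xin; rewrite /= in_itv.
Qed.

Lemma ordered_Fc0 c t (mu nu : Meas R) : Rsup mu <= Linf nu -> Fc c t (mu, nu) = 0%R.
Proof.
move=> ord; apply/eqP; rewrite eq_le Fc_ge0 andbT; apply/negP => /negP.
rewrite -ltNge /Fc => Fpos.
have h1 : (0 < Hc (\int[mu]_y (fb c y)%:E))%R.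
  by rewrite lt_def Hc_ge0 ?int_fb_ge0 // andbT; apply/eqP => h; move: Fpos; rewrite /= h mul0r ltxx.
have h2 : (0 < Hc (\int[nu]_y (gb c y)%:E))%R.
  by rewrite lt_def Hc_ge0 ?int_gb_ge0 // andbT; apply/eqP => h; move: Fpos; rewrite /= h mulr0 ltxx.
have [x [cx sx]] := fb_pos_supp c mu (@Hc_pos_inv _ (int_fb_ge0 c mu) h1).
have [y [yc sy]] := gb_pos_supp c nu (@Hc_pos_inv _ (int_gb_ge0 c nu) h2).
have : x%:E <= Rsup mu by apply: ereal_sup_ubound; exists x.
have : Linf nu <= y%:E by apply: ereal_inf_lbound; exists y.
move=> a b; have := le_trans (le_trans b ord) a.
by rewrite lee_fin leNgt (lt_trans yc cx).
Qed.

Lemma Fc0_ordered t (mu nu : Meas R) :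
  (forall q : rat, Fc (ratr q) t (mu, nu) = 0%R) -> Rsup mu <= Linf nu.
Proof.
move=> H; rewrite leNgt; apply/negP => lt.
have [_ [x sx <-] Lx] := ereal_sup_gt lt.
have [_ [y sy <-] yx] := ereal_inf_lt Lx.
move: yx; rewrite lte_fin => yx.
have [q qin] := rat_in_itvoo yx; move: qin; rewrite in_itv /= => /andP[yq qx].
have := H q; apply/eqP; rewrite /Fc /= gt_eqF //; apply: mulr_gt0; apply: Hc_gt0.
- pose c : R := ratr q; pose e := ((x - c) / 2)%R.
  have e0 : (0 < e)%R by rewrite /e; lra.
  apply: (@int_pos_supp mu (fb c) x e (expR (- (`|x| + e)) * Num.min e 1)%R (fb_meas c) (@fb_ge0 c) e0) => //.
    by rewrite mulr_gt0 ?expR_gt0 // lt_min e0 ltr01.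
  move=> z z1 z2; rewrite /fb /bumpf; apply: bump_lb => //.
  by rewrite /e in z1 *; lra.
- pose c : R := ratr q; pose e := ((c - y) / 2)%R.
  have e0 : (0 < e)%R by rewrite /e; lra.
  apply: (@int_pos_supp nu (gb c) y e (expR (- (`|y| + e)) * Num.min e 1)%R (gb_meas c) (@gb_ge0 c) e0) => //.
    by rewrite mulr_gt0 ?expR_gt0 // lt_min e0 ltr01.
  move=> z z1 z2; rewrite /gb /bumpf; apply: bump_lb => //.
  by rewrite /e in z2 *; lra.
Qed.

Lemma ordered_Fc0' c t (x : Meas R * Meas R) : Rsup x.1 <= Linf x.2 -> Fc c t x = 0%R.
Proof. exact: ordered_Fc0. Qed.

Lemma Dge0E : [set t : R | (0 <= t)%R] = `[0%R, +oo[%classic.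
Proof. by apply/seteqP; split => t /=; rewrite in_itv /= andbT. Qed.

Lemma pint_ordered c (w : mpath R) : RL_ordered w -> pseudo_int (Fc c) w = 0.
Proof.
move=> ord; rewrite /pseudo_int -(@integral_setD1 _ _ 0%R).
- rewrite integral0_eq // => t [/= t0 /eqP tn0].
  by rewrite ordered_Fc0' ?mul0r // ord // lt_def tn0 t0.
- by rewrite Dge0E; apply: measurableD => //.
- apply/measurable_realfun.measurable_EFinP.
  eapply eq_measurable_fun.
    move=> t /set_mem [/= t0 /eqP tn0].
    rewrite ordered_Fc0' ?mul0r; first reflexivity.
    by rewrite ord // lt_def tn0 t0.
  exact: measurable_cst.
Qed.

Lemma Fc_rcont sp c (w : mpath R) t (s : nat -> R) : cadlag sp w -> (0 <= t)%R ->
  (forall k, t <= s k)%R -> s @ \oo --> t ->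
  (fun k => Fc c (s k) (w (s k))) @ \oo --> Fc c t (w t).
Proof.
move=> [Esp [rc _]] t0 st sc.
apply: ((Fc_bcontE sp c).2 t (w t) s (fun k => w (s k)) t0 (Esp t t0) _ sc (rc t t0 s st sc)).
move=> k; split; first exact: le_trans t0 (st k).
exact: Esp _ (le_trans t0 (st k)).
Qed.

Lemma pint0_Fc0 sp c (w : mpath R) : cadlag sp w -> pseudo_int (Fc c) w = 0 ->
  forall t, (0 < t)%R -> Fc c t (w t) = 0%R.
Proof.
move=> cw p0 t t0; apply/eqP; rewrite eq_le Fc_ge0 andbT; apply/negP => /negP.
rewrite -ltNge => vpos.
set v := Fc c t (w t) in vpos.
have [del [del0 hdel]] : exists del : R, (0 < del)%R /\ forall s, (t <= s)%R ->
    (s <= t + del)%R -> (v / 2 <= Fc c s (w s))%R.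
  apply: contrapT => H.
  have H' : forall n : nat, exists s : R, (t <= s)%R /\ (s <= t + n.+1%:R^-1)%R /\
      (Fc c s (w s) < v / 2)%R.
    move=> n; apply: contrapT => Hn; apply: H; exists (n.+1%:R^-1)%R; split.
      by rewrite invr_gt0.
    move=> s s1 s2; rewrite leNgt; apply/negP => lt; apply: Hn; exists s; split => //.
  have [sq hs] := choice H'.
  have sc : sq @ \oo --> t.
    apply/cvgrPdist_lt => eps eps0.
    near=> n; have [h1 [h2 _]] := hs n.
    have hn : (n.+1%:R^-1 < eps)%R.
      by near: n; exact: (near_infty_natSinv_lt (PosNum eps0)).
    by rewrite ler0_norm ?subr_le0 // opprB (le_lt_trans _ hn) // lerBlDl.
  have h := Fc_rcont sp c w t sq cw (ltW t0) (fun k => (hs k).1) sc.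
  have v2 : (0 < v / 2)%R by lra.
  have [N _ HN] := (cvgrPdist_lt _ _).1 h (v / 2)%R v2.
  have := HN N (leqnn N); have [_ [_ h3]] := hs N.
  by have := ler_norm (v - Fc c (sq N) (w (sq N)))%R; lra.
have k0 : (0 < v / 2 * expR (- (t + del)))%R by rewrite mulr_gt0 ?expR_gt0 //; lra.
have key : ((v / 2 * expR (- (t + del))) * del)%:E <= pseudo_int (Fc c) w.
  have e1 : \int[lebesgue_measure]_(s in `[t, (t + del)%R]%classic)
      (cst (v / 2 * expR (- (t + del)))%R%:E) s = ((v / 2 * expR (- (t + del))) * del)%:E.
    rewrite integral_cst //= lebesgue_measure_itv /= lte_fin ltrDl del0 /=.
    by rewrite -EFinB -EFinM addrAC subrr add0r.
  rewrite -e1; apply: nn_mono.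
  - by move=> s _; rewrite lee_fin ltW.
  - move=> s; rewrite /= in_itv /= => /andP[s1 s2]; split; first by lra.
    rewrite lee_fin; apply: ler_pM.
    + lra.
    + exact: ltW (expR_gt0 _).
    + exact: hdel.
    + by rewrite ler_expR; lra.
  - by move=> s _; rewrite lee_fin mulr_ge0 ?Fc_ge0 // ltW // expR_gt0.
move: key; rewrite p0 lee_fin leNgt; apply/negP.
by rewrite mulr_gt0.
Unshelve. all: by end_near.
Qed.

Lemma Hc0 : Hc 0 = 0%R.
Proof. by rewrite /Hc /mine lte01. Qed.

Lemma Hc_eq0 y : 0 <= y -> Hc y = 0%R -> y = 0.
Proof.
move=> y0 h; apply/eqP; rewrite eq_le y0 andbT leNgt; apply/negP => /Hc_gt0.
by rewrite h ltxx.
Qed.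

End S.
Arguments Gc {R}. Arguments Fc {R}. Arguments Hc {R}. Arguments Gc_ge0 {R}.
Arguments Gc_MZbcont {R}. Arguments pint_ordered {R}. Arguments pint_ge0 {R}.
Arguments Hc_eq0 {R}. Arguments Hc0 {R}. Arguments Fc0_ordered {R}. Arguments pint0_Fc0 {R}.

Theorem lemma5p3 (R : realType) (sp : bool) (d : measure_display)
  (T : measurableType d) (P : probability T R)
  (Xs : nat -> T -> mpath R) (X : T -> mpath R) :
  (forall n, Dprocess sp (Xs n)) -> Dprocess sp X ->
  MZweak_conv sp P Xs X ->
  (exists A, measurable A /\ P A = 1%E /\
     forall om, A om -> forall n, RL_ordered (Xs n om)) ->
  exists A, measurable A /\ P A = 1%E /\ forall om, A om -> RL_ordered (X om).
Proof.

move=> DXs DX wc [A0 [mA0 [PA0 ordA0]]].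
have PcA0 : P (~` A0) = 0%E by rewrite probability_setC // PA0 subee.
have GXs0 : forall (c : R) n, (\int[P]_om (Gc c (Xs n om))%:E = 0)%E.
  move=> c n.
  rewrite (ge0_negligible_integral _ _ _ _ PcA0) //; first last.
  - by move=> om _; rewrite lee_fin Gc_ge0.
  - by apply/measurable_realfun.measurable_EFinP; apply: (DXs n).2; exact: Gc_MZbcont.
  - exact: measurableC.
  apply: integral0_eq => om [_ /contrapT Aom].
  by rewrite /Gc pint_ordered ?Hc0 //; exact: ordA0.
have GX0 : forall c : R, (\int[P]_om (Gc c (X om))%:E = 0)%E.
  move=> c; have h := wc (Gc c) (Gc_MZbcont sp c).
  have E : (fun n => (\int[P]_om (Gc c (Xs n om))%:E)%E) = (fun _ => 0%E).
    by apply: funext => n; exact: GXs0.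
  rewrite E in h.
  by rewrite -(cvg_lim (@ereal_hausdorff R) h) lim_cst.
have ae : forall c : R, exists N, measurable N /\ P N = 0%E /\
    forall om, ~ N om -> Gc c (X om) = 0%R.
  move=> c.
  have mG : measurable_fun setT (fun om => Gc c (X om)).
    by apply: DX.2; exact: Gc_MZbcont.
  have h : (\int[P]_(om in setT) `|(Gc c (X om))%:E| = 0)%E.
    rewrite -(GX0 c); apply: eq_integral => om _.
    by rewrite gee0_abs // lee_fin Gc_ge0.
  have := (ae_eq_integral_abs P measurableT (f := fun om => (Gc c (X om))%:E) _).1 h.
  move=> /(_ _) [].
    exact/measurable_realfun.measurable_EFinP.
  move=> N [mN PN sub]; exists N; split => //; split => // om Nom.
  apply: contrapT => ne; apply: Nom; apply: sub => /=.
  by move=> /(_ I) [].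
have [Nf HN] := choice (fun q : rat => ae (ratr q)).
pose N' : nat -> set T := fun n => match (unpickle n : option rat) with
  | Some q => Nf q | None => set0 end.
have N'neg : forall n, P.-negligible (N' n).
  move=> n; rewrite /N'; case: (unpickle n) => [q|]; last exact: negligible_set0.
  by have [mN [PN _]] := HN q; exists (Nf q); split.
have [B [mB PB0 UB]] := negligible_bigcup N'neg.
exists (~` B); split; first exact: measurableC.
split; first by rewrite probability_setC // PB0 sube0.
move=> om nB t t0.
apply: (Fc0_ordered t) => q.
have [_ [_ Hq]] := HN q.
have hG : Gc (ratr q) (X om) = 0%R.
  apply: Hq => Nq; apply: nB; apply: UB; exists (pickle q); first by [].
  by rewrite /N' pickleK.
have hp := Hc_eq0 _ (pint_ge0 _ _) hG.
exact: (pint0_Fc0 _ _ _ (DX.1 om) hp t t0).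
Qed.
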